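(* Let $-\pi\le\mu_1,\mu_2<\pi$ and $0\le\rho_1,\rho_2<1$, and consider the probability density on $[-\pi,\pi)$ $$f(\theta)=C\left[\{1+\rho_1^2-2\rho_1\cos(\theta-\mu_1)\}\{1+\rho_2^2-2\rho_2\cos(\theta-\mu_2)\}\right]^{-1},$$ with $C>0$ the normalizing constant. Then $f$ is symmetric (about some point of the circle) if and only if $\rho_1=\rho_2$, or $\rho_j=0$ for some $j\in\{1,2\}$, or $\mu_1=\mu_2+(j-1)\pi$ for some $j\in\{1,2\}$ (angles taken modulo $2\pi$). *)

(* Defs.v *)
From Stdlib Require Import Reals Lra.
From Coquelicot Require Import Coquelicot.
Open Scope R_scope.

Definition wc_kernel (m1 m2 r1 r2 : R) (t : R) : R :=
  / ((1 + r1 ^ 2 - 2 * r1 * cos (t - m1)) * (1 + r2 ^ 2 - 2 * r2 * cos (t - m2))).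

(* The density f(theta) = C * kernel(theta), viewed as a 2*pi-periodic
   function on R (i.e. a function on the circle). *)
Definition wc_density (C m1 m2 r1 r2 : R) (t : R) : R :=
  C * wc_kernel m1 m2 r1 r2 t.

Definition circ_symmetric (f : R -> R) : Prop :=
  exists phi : R, forall t : R, f (phi + t) = f (phi - t).

Definition eq_mod_2pi (a b : R) : Prop :=
  exists k : Z, a = b + 2 * IZR k * PI.

(* Main.v *)
Require Import Defs.
From Stdlib Require Import Reals Lra ZArith.
From Coquelicot Require Import Coquelicot.
Open Scope R_scope.

Lemma A_pos (r z : R) : 0 <= r < 1 -> 0 < 1 + r ^ 2 - 2 * r * cos z.
Proof.
  intros [h0 h1]. pose proof (COS_bound z) as [_ hc].
  assert (r * cos z <= r) by (apply Rle_trans with (r*1); [apply Rmult_le_compat_l; lra | lra]).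
  nra.
Qed.

Lemma inv_eq (C x y : R) : 0 < C -> 0 < x -> 0 < y -> C * / x = C * / y -> x = y.
Proof.
  intros hC hx hy h.
  assert (/ x = / y) by (apply Rmult_eq_reg_l with C; lra).
  rewrite <- (Rinv_inv x), <- (Rinv_inv y). now rewrite H.
Qed.

Theorem theorem3 (m1 m2 r1 r2 C : R)
  (hm1 : - PI <= m1 < PI) (hm2 : - PI <= m2 < PI)
  (hr1 : 0 <= r1 < 1) (hr2 : 0 <= r2 < 1)
  (hC : 0 < C)
  (hnorm : is_RInt (wc_density C m1 m2 r1 r2) (- PI) PI 1) :
  circ_symmetric (wc_density C m1 m2 r1 r2) <->
  (r1 = r2 \/ r1 = 0 \/ r2 = 0 \/
   eq_mod_2pi m1 m2 \/ eq_mod_2pi m1 (m2 + PI)).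
Proof.
  unfold circ_symmetric, wc_density, wc_kernel. split.
  - intros [phi Hphi].
    assert (Hk : forall t, (1 + r1 ^ 2 - 2 * r1 * (cos (phi - m1) * cos t - sin (phi - m1) * sin t)) *
                           (1 + r2 ^ 2 - 2 * r2 * (cos (phi - m2) * cos t - sin (phi - m2) * sin t)) =
                           (1 + r1 ^ 2 - 2 * r1 * (cos (phi - m1) * cos t + sin (phi - m1) * sin t)) *
                           (1 + r2 ^ 2 - 2 * r2 * (cos (phi - m2) * cos t + sin (phi - m2) * sin t))).
    { intro t. specialize (Hphi t).
      apply inv_eq in Hphi; try assumption;
        try (apply Rmult_lt_0_compat; apply A_pos; assumption).
      rewrite <- cos_plus, <- cos_plus, <- cos_minus, <- cos_minus.
      replace (phi - m1 + t) with (phi + t - m1) by ring.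
      replace (phi - m2 + t) with (phi + t - m2) by ring.
      replace (phi - m1 - t) with (phi - t - m1) by ring.
      replace (phi - m2 - t) with (phi - t - m2) by ring.
      exact Hphi. }
    destruct (Req_dec r1 0) as [e1|n1]; [tauto|].
    destruct (Req_dec r2 0) as [e2|n2]; [tauto|].
    set (s1 := sin (phi - m1)) in *. set (s2 := sin (phi - m2)) in *.
    set (c1 := cos (phi - m1)) in *. set (c2 := cos (phi - m2)) in *.
    assert (E1 : (1 + r1^2) * r2 * s2 + (1 + r2^2) * r1 * s1 = 0).
    { pose proof (Hk (PI/2)) as h. rewrite cos_PI2, sin_PI2 in h. nra. }
    assert (E2 : c1 * s2 + s1 * c2 = 0).
    { pose proof (Hk (PI/4)) as h. rewrite <- sin_cos_PI4 in h.
      set (k := sin (PI/4)) in *.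
      assert (kp : 0 < k) by (apply sin_gt_0; pose proof PI_RGT_0; lra).
      assert (hE : k * ((1 + r1^2) * r2 * s2 + (1 + r2^2) * r1 * s1) = 0) by (rewrite E1; ring).
      assert (h2 : r1 * r2 * k * k * (c1 * s2 + s1 * c2) = 0).
      { match type of h with ?L = ?R =>
          replace (r1 * r2 * k * k * (c1 * s2 + s1 * c2)) with
            (k * ((1 + r1^2) * r2 * s2 + (1 + r2^2) * r1 * s1) / 2 - (L - R) / 8) by field end.
        rewrite hE, h. field. }
      assert (r1 * r2 * k * k <> 0).
      { repeat apply Rmult_integral_contrapositive_currified; lra. }
      apply Rmult_integral in h2. destruct h2; [contradiction|assumption]. }
    assert (P1 : s1^2 + c1^2 = 1) by (unfold s1, c1; rewrite <- !Rsqr_pow2; apply sin2_cos2).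
    assert (P2 : s2^2 + c2^2 = 1) by (unfold s2, c2; rewrite <- !Rsqr_pow2; apply sin2_cos2).
    assert (SQ : s1^2 = s2^2).
    { assert (e3 : c1 * s2 = - (s1 * c2)) by lra.
      assert (e4 : s1^2 * c2^2 = s2^2 * c1^2).
      { replace (s1^2 * c2^2) with ((s1*c2)^2) by ring.
        replace (s2^2 * c1^2) with ((c1*s2)^2) by ring. rewrite e3. ring. }
      replace (c2^2) with (1 - s2^2) in e4 by lra.
      replace (c1^2) with (1 - s1^2) in e4 by lra.
      assert (e5 : s1^2 - s2^2 = 0) by (rewrite <- (Rminus_diag_eq _ _ e4); ring).
      lra. }
    assert (Hpos1 : 0 < r1) by lra. assert (Hpos2 : 0 < r2) by lra.
    destruct (Req_dec s1 0) as [z1|nz1].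
    + assert (z2 : s2 = 0).
      { assert (s2^2 = 0) by nra. nra. }
      right; right; right.
      destruct (sin_eq_0_0 _ z1) as [k Hk1].
      destruct (sin_eq_0_0 _ z2) as [l Hl].
      assert (Hm : m1 = m2 + IZR (l - k) * PI) by (rewrite minus_IZR; lra).
      destruct (Z.Even_or_Odd (l - k)) as [[q Hq]|[q Hq]]; rewrite Hq in Hm.
      * left. exists q. rewrite Hm, mult_IZR. ring.
      * right. exists q. rewrite Hm, plus_IZR, mult_IZR. ring.
    + left.
      assert (Ha : (1 + r1^2) * r2 = (1 + r2^2) * r1).
      { assert (e6 : (1 + r1^2) * r2 * s2 = - ((1 + r2^2) * r1 * s1)) by lra.
        assert (((1 + r1^2) * r2)^2 * s1^2 = ((1 + r2^2) * r1)^2 * s1^2).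
        { assert (e7 : ((1 + r1^2) * r2 * s2)^2 = ((1 + r2^2) * r1 * s1)^2) by (rewrite e6; ring).
          replace (((1 + r1^2) * r2)^2 * s1^2) with (((1 + r1^2) * r2)^2 * s2^2) by (rewrite SQ; reflexivity).
          replace (((1 + r1^2) * r2)^2 * s2^2) with (((1 + r1^2) * r2 * s2)^2) by ring.
          rewrite e7. ring. }
        assert (s1^2 > 0) by nra.
        assert (e8 : ((1 + r1^2) * r2)^2 = ((1 + r2^2) * r1)^2).
        { apply Rmult_eq_reg_r with (s1^2); [assumption|lra]. }
        set (A := (1 + r1^2) * r2) in *. set (B := (1 + r2^2) * r1) in *.
        assert (0 < A) by (unfold A; nra). assert (0 < B) by (unfold B; nra).
        assert (e9 : (A - B) * (A + B) = 0) by (replace ((A - B) * (A + B)) with (A^2 - B^2) by ring; lra).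
        apply Rmult_integral in e9. destruct e9; lra. }
      assert (e10 : (r1 - r2) * (1 - r1 * r2) = 0).
      { replace ((r1 - r2) * (1 - r1 * r2)) with ((1 + r2^2) * r1 - (1 + r1^2) * r2) by ring. lra. }
      assert (1 - r1 * r2 > 0) by nra.
      apply Rmult_integral in e10. destruct e10; lra.
  - intros H.
    assert (Hw : forall w t, sin w = 0 -> cos (w + t) = cos (w - t)).
    { intros w t hw. rewrite cos_plus, cos_minus, hw. ring. }
    destruct H as [e|[e|[e|[[k e]|[k e]]]]].
    + subst r2. exists ((m1 + m2) / 2). intro t. f_equal. f_equal.
      replace ((m1 + m2) / 2 + t - m1) with (t - (m1 - m2)/2) by field.
      replace ((m1 + m2) / 2 + t - m2) with (t + (m1 - m2)/2) by field.
      replace ((m1 + m2) / 2 - t - m1) with (- (t + (m1 - m2)/2)) by field.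
      replace ((m1 + m2) / 2 - t - m2) with (- (t - (m1 - m2)/2)) by field.
      rewrite !cos_neg. ring.
    + subst r1. exists m2. intro t. f_equal. f_equal.
      replace (m2 + t - m2) with t by ring.
      replace (m2 - t - m2) with (- t) by ring. rewrite cos_neg. ring.
    + subst r2. exists m1. intro t. f_equal. f_equal.
      replace (m1 + t - m1) with t by ring.
      replace (m1 - t - m1) with (- t) by ring. rewrite cos_neg. ring.
    + exists m1. intro t. f_equal. f_equal.
      replace (m1 + t - m1) with t by ring.
      replace (m1 - t - m1) with (- t) by ring. rewrite cos_neg.
      replace (m1 + t - m2) with ((m1 - m2) + t) by ring.
      replace (m1 - t - m2) with ((m1 - m2) - t) by ring.
      rewrite Hw; [ring|]. apply sin_eq_0_1. exists (2 * k)%Z.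
      rewrite mult_IZR. lra.
    + exists m1. intro t. f_equal. f_equal.
      replace (m1 + t - m1) with t by ring.
      replace (m1 - t - m1) with (- t) by ring. rewrite cos_neg.
      replace (m1 + t - m2) with ((m1 - m2) + t) by ring.
      replace (m1 - t - m2) with ((m1 - m2) - t) by ring.
      rewrite Hw; [ring|]. apply sin_eq_0_1. exists (2 * k + 1)%Z.
      rewrite plus_IZR, mult_IZR. lra.
Qed.
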